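(* The competitive ratio of every (randomized) online algorithm solving the generalized $k$-server problem in uniform metrics is at least $\Omega(k)$: there is an absolute constant $c>0$ such that for every $k\ge 1$, every choice of uniform metric spaces $M_1,\dots,M_k$ (each with at least two points) and initial server positions, no randomized online algorithm is $\beta$-competitive (against an oblivious adversary) with $\beta< c k$.
   Context: Generalized $k$-server problem in uniform metrics: given uniform metric spaces $M_1,\dots,M_k$, where $M_i$ has $n_i\ge 2$ points at pairwise distance $1$, server $s_i$ starts at a fixed point of $M_i$ and always stays in $M_i$. Requests arrive online as $k$-tuples $(r_1,\dots,r_k)\in\prod_i M_i$; to serve a request an algorithm moves servers so that $s_i$ is at $r_i$ for at least one $i$, before seeing the next request. The cost is the total distance traveled by all servers. A randomized online algorithm $\mathrm{ALG}$ is $\beta$-competitive if there is a constant $\gamma$ (possibly depending on $k$ but not on the request sequence) such that for every input $I$, $\mathbf{E}[\mathrm{ALG}(I)]\le \beta\cdot\mathrm{OPT}(I)+\gamma$, where $\mathrm{OPT}(I)$ is the optimal offline cost; the competitive ratio is the infimum of such $\beta$. *)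

(* Defs.v *)
From HB Require Import structures.
From mathcomp Require Import all_boot all_order all_algebra.
From mathcomp Require Import classical_sets boolp reals ereal measure lebesgue_measure lebesgue_integral probability.
Set Implicit Arguments. Unset Strict Implicit. Unset Printing Implicit Defensive.
Import Order.TTheory GRing.Theory Num.Theory.
Local Open Scope ring_scope.
Local Open Scope classical_set_scope.

(* Generalized k-server in uniform metrics.  Metric space M_i is 'I_(n i)
   (n i points, pairwise distance 1).  A configuration (and a request) is a
   k-tuple (p_i)_i with p_i in M_i. *)
Definition cfg (k : nat) (n : 'I_k -> nat) := forall i : 'I_k, 'I_(n i).

Definition dist (k : nat) (n : 'I_k -> nat) (c c' : cfg n) : nat := (\sum_(i < k) (c i != c' i))%N.

Definition serves (k : nat) (n : 'I_k -> nat) (c r : cfg n) : bool := [exists i : 'I_k, c i == r i].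

(* Deterministic online algorithm: the configuration after serving the
   requests r_1..r_t is a function of (r_1..r_t) only. *)
Definition online_alg (k : nat) (n : 'I_k -> nat) := seq (cfg n) -> cfg (k:=k) n.

Definition valid_alg (k : nat) (n : 'I_k -> nat) (A : online_alg n) : Prop :=
  forall (s : seq (cfg n)) (r : cfg n), serves (A (rcons s r)) r.

Definition alg_pos (k : nat) (n : 'I_k -> nat) (start : cfg n) (A : online_alg (k:=k) n)
  (I : seq (cfg n)) (t : nat) : cfg n :=
  if t == 0%N then start else A (take t I).

Definition alg_cost (k : nat) (n : 'I_k -> nat) (start : cfg n) (A : online_alg (k:=k) n)
  (I : seq (cfg n)) : nat :=
  (\sum_(t < size I) dist (alg_pos start A I t) (alg_pos start A I t.+1))%N.

Definition offline_feasible (k : nat) (n : 'I_k -> nat) (start : cfg (k:=k) n) (I s : seq (cfg n)) : Prop :=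
  size s = size I /\
  forall t, (t < size I)%N -> serves (nth start s t) (nth start I t).

Definition offline_cost (k : nat) (n : 'I_k -> nat) (start : cfg (k:=k) n) (s : seq (cfg n)) : nat :=
  (\sum_(t < size s) dist (nth start (start :: s) t) (nth start s t))%N.

Definition OPT (R : realType) (k : nat) (n : 'I_k -> nat) (start : cfg (k:=k) n) (I : seq (cfg n)) : R :=
  inf [set x : R | exists s, offline_feasible start I s /\
                             x = (offline_cost start s)%:R].

(* A randomized online algorithm: a probability space (Omega, P) and, for
   each random outcome w, a valid deterministic online algorithm A w; the
   cost on every fixed input is a measurable function of w. *)
Definition randomized_alg (R : realType) (d : measure_display)
  (Omega : measurableType d) (P : probability Omega R) (k : nat) (n : 'I_k -> nat)
  (A : Omega -> online_alg (k:=k) n) (start : cfg n) : Prop :=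
  (forall w, valid_alg (A w)) /\
  forall I : seq (cfg n),
    measurable_fun setT (fun w => ((alg_cost start (A w) I)%:R : R)).

(* beta-competitive (against an oblivious adversary):
   E[ALG(I)] <= beta * OPT(I) + gamma for all inputs I. *)
Definition competitive (R : realType) (d : measure_display)
  (Omega : measurableType d) (P : probability Omega R) (k : nat) (n : 'I_k -> nat)
  (A : Omega -> online_alg (k:=k) n) (start : cfg n) (beta : R) : Prop :=
  exists gamma : R, forall I : seq (cfg n),
    (\int[P]_w ((alg_cost start (A w) I)%:R : R)%:E
       <= (beta * OPT R start I + gamma)%:E)%E.

(* Main.v *)
Require Import Defs.
From HB Require Import structures.
From mathcomp Require Import all_boot all_order all_algebra.
From mathcomp Require Import zify ring lra.
Set Implicit Arguments. Unset Strict Implicit. Unset Printing Implicit Defensive.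

Definition hd k (y y' : {ffun 'I_k -> bool}) := (\sum_(i < k) (y i != y' i))%N.

Section Code.
Variable k : nat.
Local Notation bv := {ffun 'I_k -> bool}.

Lemma hd_sym (x y : bv) : hd x y = hd y x.
Proof. by rewrite /hd; apply: eq_bigr => i _; rewrite eq_sym. Qed.

Lemma hd_xx (x : bv) : hd x x = 0%N.
Proof. by rewrite /hd big1 // => i _; rewrite eqxx. Qed.

Definition wt (s x : bv) : nat := (\prod_(i < k) (if x i == s i then 16 else 1))%N.

Lemma sum_wt s : (\sum_(x : bv) wt s x = 17 ^ k)%N.
Proof.
rewrite /wt -(bigA_distr_bigA (fun i (c : bool) => if c == s i then 16 else 1)%N) /=.
under eq_bigr => i _ do rewrite big_bool.
rewrite (eq_bigr (fun _ => 17%N)).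
  by rewrite prod_nat_const card_ord.
by move=> i _; case: (s i).
Qed.

Lemma card_pred_sum (P : pred bv) : #|P| = (\sum_(x : bv) (P x : nat))%N.
Proof.
rewrite -sum1_card big_mkcond /=; apply: eq_bigr => x _.
by rewrite unfold_in; case: (P x).
Qed.

Lemma card_pred_sum_ord (P : pred 'I_k) : #|P| = (\sum_(i < k) (P i : nat))%N.
Proof.
rewrite -sum1_card big_mkcond /=; apply: eq_bigr => x _.
by rewrite unfold_in; case: (P x).
Qed.

Lemma wt_eq s x : wt s x = (16 ^ (k - hd x s))%N.
Proof.
rewrite /wt -big_mkcond prod_nat_const.
have -> : hd x s = #|[pred i : 'I_k | x i != s i]|.
  rewrite card_pred_sum_ord /hd; apply: eq_bigr => i _; by rewrite /=.
have E1 : #|[pred i : 'I_k | x i != s i]| = #|[predC [pred i : 'I_k | x i == s i]]|.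
  by apply: eq_card => i; rewrite !inE.
have E2 := cardC [pred i : 'I_k | x i == s i]; rewrite card_ord in E2.
rewrite E1; congr (16 ^ _)%N.
have E3 : #|(fun i : 'I_k => x i == s i)| = #|[pred i : 'I_k | x i == s i]| by apply: eq_card.
rewrite E3; move/(f_equal (fun m => m - #|[predC [pred i : 'I_k | x i == s i]]|)%N): E2.
by rewrite addnK.
Qed.

Lemma ball_bound s D : (D <= k)%N ->
  ((\sum_(x : bv) ((hd x s < D)%N : nat)) * 16 ^ (k - D) <= 17 ^ k)%N.
Proof.
move=> HD; rewrite -(sum_wt s) big_distrl /=.
apply: leq_sum => x _; rewrite wt_eq.
case: ltnP => H //=; rewrite mul1n leq_pexp2l //.
by apply: leq_sub2l; apply: ltnW.
Qed.

Lemma gv D a : (0 < D)%N -> (D <= k)%N -> (2 ^ a * 17 ^ k <= 2 ^ k * 16 ^ (k - D))%N ->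
  exists enc : {ffun 'I_a -> bool} -> bv, forall v v', v != v' -> (D <= hd (enc v) (enc v'))%N.
Proof.
move=> D0 Dk Hnum.
pose P (S : {set bv}) := [forall x in S, forall y in S, (x != y) ==> (D <= hd x y)%N].
have P0 : P set0 by apply/forall_inP => x; rewrite inE.
case: (arg_maxnP (fun S : {set bv} => #|S|) P0) => S PS Smax.
have cov : forall x, exists2 s, s \in S & (hd x s < D)%N.
  move=> x; case: (boolP [exists s in S, (hd x s < D)%N]) => [/exists_inP [s sS Hs]|Hn].
    by exists s.
  exfalso.
  have xS : x \notin S.
    apply/negP => xS; move: Hn; rewrite negb_exists_in => /forall_inP /(_ x xS).
    by rewrite hd_xx D0.
  have : P (x |: S).
    apply/forall_inP => y; rewrite in_setU1 => Hy; apply/forall_inP => z; rewrite in_setU1 => Hz.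
    move: Hn; rewrite negb_exists_in => /forall_inP Hn.
    case/orP: Hy => [/eqP ->|yS]; case/orP: Hz => [/eqP ->|zS]; apply/implyP => yz.
    - by rewrite eqxx in yz.
    - by move: (Hn z zS); rewrite -leqNgt.
    - by move: (Hn y yS); rewrite -leqNgt hd_sym.
    - by move/forall_inP: PS => /(_ y yS) /forall_inP /(_ z zS) /implyP; apply.
  move/Smax; rewrite cardsU1 xS add1n /=.
  by rewrite ltnn.
have cnt : (2 ^ k * 16 ^ (k - D) <= #|S| * 17 ^ k)%N.
  have -> : (2 ^ k = #|{: bv}|)%N by rewrite card_ffun card_bool card_ord.
  apply: (@leq_trans ((\sum_(s in S) \sum_(x : bv) ((hd x s < D)%N : nat)) * 16 ^ (k - D))%N).
    rewrite leq_mul2r; apply/orP; right.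
    rewrite cardT -sum1_size big_enum /=.
    rewrite exchange_big /=; apply: leq_sum => x _.
    have [s sS Hs] := cov x.
    by rewrite (bigD1 s) //= Hs.
  rewrite big_distrl /= -sum_nat_const; apply: leq_sum => s _.
  exact: ball_bound.
have Sa : (2 ^ a <= #|S|)%N.
  rewrite leqNgt; apply/negP => H.
  have : (#|S| * 17 ^ k < 2 ^ a * 17 ^ k)%N by rewrite ltn_mul2r expn_gt0 H.
  by rewrite ltnNge (leq_trans Hnum cnt).
pose x0 : bv := [ffun=> false].
exists (fun v => nth x0 (enum S) (enum_rank v)) => v v' ne.
have Hr : forall u : {ffun 'I_a -> bool}, (enum_rank u < size (enum S))%N.
  move=> u; rewrite -cardE; apply: leq_trans Sa.
  have C : #|{: {ffun 'I_a -> bool}}| = (2 ^ a)%N by rewrite card_ffun card_bool card_ord.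
  by apply: leq_trans (ltn_ord (enum_rank u)) _; rewrite C.
have ne' : nth x0 (enum S) (enum_rank v) != nth x0 (enum S) (enum_rank v').
  rewrite nth_uniq ?Hr ?enum_uniq //.
  by apply: contra ne => /eqP E; apply/eqP; apply: enum_rank_inj; exact: val_inj.
have m1 := mem_nth x0 (Hr v); have m2 := mem_nth x0 (Hr v'); rewrite mem_enum in m1; rewrite mem_enum in m2.
by move/forall_inP: PS => /(_ _ m1) /forall_inP /(_ _ m2) /implyP; apply.
Qed.
End Code.

Lemma leq_expbase m n e : (m <= n -> m ^ e <= n ^ e)%N.
Proof. by move=> H; elim: e => // e IH; rewrite !expnS leq_mul. Qed.

Lemma num32 a k : (32 * a <= k -> 2 ^ a * 17 ^ k <= 2 ^ k * 16 ^ (k - a))%N.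
Proof.
move=> H.
rewrite -(@leq_pmul2r (16 ^ a)) ?expn_gt0 //.
have Hak : (a <= k)%N by apply: leq_trans H; rewrite leq_pmull.
have ER : (2 ^ k * 16 ^ (k - a) * 16 ^ a = 32 ^ k)%N by rewrite -mulnA -expnD subnK // -expnMn.
have EL : (2 ^ a * 17 ^ k * 16 ^ a = 32 ^ a * 17 ^ k)%N by rewrite mulnAC -expnMn.
rewrite ER EL.
have [r ->] : exists r, k = (32 * a + r)%N by exists (k - 32 * a)%N; rewrite subnKC.
rewrite (expnD 17 (32 * a) r) (expnD 32 (32 * a) r) mulnA leq_mul //; last exact: leq_expbase.
have h1 : (32 * 17 ^ 32 <= 32 ^ 32)%N.
  have h2 : ((2 * 17 ^ 2) ^ 16 <= (32 ^ 2) ^ 16)%N by apply: leq_expbase.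
  rewrite -!expnM /= expnMn -expnM /= in h2.
  apply: leq_trans h2; rewrite leq_mul2r; apply/orP; right.
  by rewrite (_ : 32 = 2 ^ 5)%N // leq_pexp2l.
have -> : (32 ^ a * 17 ^ (32 * a) = (32 * 17 ^ 32) ^ a)%N by rewrite expnMn expnM.
rewrite expnM; exact: leq_expbase.
Qed.

Lemma code_exists k : (1 <= k)%N -> exists b D (enc : {ffun 'I_b -> bool} -> {ffun 'I_k -> bool}),
  [/\ (0 < b)%N, (1 < D)%N || (b == 1%N),
      (forall v v', v != v' -> (D <= hd (enc v) (enc v'))%N) & (k * k <= 2304 * (b * D))%N].
Proof.
move=> k1; case: (ltnP k 64) => Hk.
  exists 1%N, k, (fun v => [ffun _ : 'I_k => v ord0]); split => //.
  - by rewrite orbT.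
  - move=> v v' ne.
    have ne0 : v ord0 != v' ord0.
      apply: contra ne => /eqP E; apply/eqP/ffunP => i.
      by rewrite (ord1 i).
    rewrite /hd (eq_bigr (fun _ => 1%N)) ?sum1_card ?card_ord // => i _.
    by rewrite !ffunE ne0.
  - by rewrite mul1n; apply: leq_mul => //; apply: leq_trans (ltnW Hk) _.
set a := (k %/ 32)%N.
have Ek := divn_eq k 32; rewrite -/a in Ek.
have Hr : (k %% 32 < 32)%N by rewrite ltn_pmod.
set r := (k %% 32)%N in Ek Hr.
have a2 : (2 <= a)%N by lia.
have ak : (a <= k)%N by lia.
have ak32 : (32 * a <= k)%N by lia.
have [enc Henc] := @gv k a a (ltnW a2) ak (num32 ak32).
exists a, a, enc; split => //.
- by apply: leq_trans a2.
- by rewrite a2.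
have k48 : (k <= 48 * a)%N by lia.
apply: leq_trans (leq_mul k48 k48) _.
by rewrite mulnACA.
Qed.

From mathcomp Require Import classical_sets boolp reals ereal measure lebesgue_measure lebesgue_integral probability measurable_realfun.
Import Order.TTheory GRing.Theory Num.Theory.

Section Comb.
Variables (k : nat) (n : 'I_k -> nat).
Implicit Types c : cfg n.

Lemma dist_tri c1 c2 c3 : (dist c1 c3 <= dist c1 c2 + dist c2 c3)%N.
Proof.
rewrite /dist -big_split /=; apply: leq_sum => i _.
case: (c1 i =P c2 i) => [->|_] /=; first by rewrite add0n.
by rewrite add1n; case: (_ != _).
Qed.

Lemma dist_le_k c c' : (dist c c' <= k)%N.
Proof.
rewrite /dist -[X in (_ <= X)%N]card_ord -sum1_card; apply: leq_sum => i _; exact: leq_b1.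
Qed.

Lemma dist_refl c : dist c c = 0%N.
Proof. by rewrite /dist big1 // => i _; rewrite eqxx. Qed.

Lemma dist_pos c c' r : ~~ serves c r -> serves c' r -> (0 < dist c c')%N.
Proof.
rewrite /serves negb_exists => /forallP H /existsP [i /eqP Hi].
rewrite /dist (bigD1 i) //= ltn_addr //.
by move: (H i); rewrite -Hi eq_sym => ->.
Qed.

Definition costr (q : nat -> cfg n) s m := (\sum_(i < m) dist (q (s+i)%N) (q (s+i).+1))%N.

Lemma costr_add q s m1 m2 : costr q s (m1+m2) = (costr q s m1 + costr q (s+m1) m2)%N.
Proof.
rewrite /costr big_split_ord /=; congr (_ + _)%N.
by apply: eq_bigr => i _; rewrite addnA.
Qed.

Lemma costr_tri q s m : (dist (q s) (q (s+m)%N) <= costr q s m)%N.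
Proof.
elim: m => [|m IH]; first by rewrite addn0 dist_refl.
rewrite -addn1 costr_add; apply: leq_trans (dist_tri _ (q (s+m)%N) _) _.
rewrite leq_add // /costr big_ord1 addn0 addn1 addnS.
by [].
Qed.

Lemma costr_mono q s m1 m2 : (m1 <= m2)%N -> (costr q s m1 <= costr q s m2)%N.
Proof. by move/subnKC <-; rewrite costr_add leq_addr. Qed.

Lemma sweeps_lb (alive : cfg n -> Prop) (sw : seq (cfg n)) d0 L q s :
  (forall c, ~ alive c -> exists2 r, r \in sw & ~~ serves c r) ->
  (forall i, (i < size (flatten (nseq L sw)))%N ->
      serves (q (s+i).+1) (nth d0 (flatten (nseq L sw)) i)) ->
  (L <= costr q s (size (flatten (nseq L sw))))%N \/
  exists2 a, alive a & (dist (q s) a <= costr q s (size (flatten (nseq L sw))))%N.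
Proof.
move=> Hsw; elim: L s => [|L IH] s Hq; first by left.
have [Ha|Ha] := pselect (alive (q s)).
  by right; exists (q s) => //; rewrite dist_refl.
have [r rin Hr] := Hsw _ Ha.
have E : flatten (nseq L.+1 sw) = sw ++ flatten (nseq L sw) by [].
rewrite E in Hq *; rewrite size_cat costr_add.
have Hq' : forall i, (i < size (flatten (nseq L sw)))%N ->
      serves (q ((s + size sw) + i).+1) (nth d0 (flatten (nseq L sw)) i).
  move=> i Hi; have := Hq (size sw + i)%N.
  have F : (size sw + i < size sw)%N = false by rewrite ltnNge leq_addr.
  rewrite size_cat ltn_add2l nth_cat F addKn addnA.
  by apply.
have H1 : (0 < costr q s (size sw))%N.
  have Hi : (index r sw < size sw)%N by rewrite index_mem.
  apply: leq_trans (costr_mono q s Hi).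
  apply: leq_trans (costr_tri _ _ _); rewrite addnS.
  apply: dist_pos Hr _.
  have := Hq (index r sw) _; rewrite nth_cat Hi nth_index //.
  by apply; rewrite size_cat ltn_addr.
case: (IH (s + size sw)%N Hq') => [HL|[a Ha' Hd]].
  by left; rewrite -add1n leq_add.
right; exists a => //.
apply: leq_trans (dist_tri _ (q (s + size sw)%N) _) _.
by apply: leq_add => //; apply: costr_tri.
Qed.

End Comb.


Section Bin.
Variables (k : nat) (n : 'I_k -> nat) (h : forall i, (2 <= n i)%N).
Variables (b : nat) (enc : {ffun 'I_b -> bool} -> {ffun 'I_k -> bool}).

Lemma bitlt (m : nat) (hm : (2 <= m)%N) (x : bool) : (x < m)%N.
Proof. exact: leq_ltn_trans (leq_b1 x) hm. Qed.

Definition emb (y : {ffun 'I_k -> bool}) : cfg n := fun i => Ordinal (bitlt (h i) (y i)).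

Lemma emb_val y i : (emb y i : nat) = y i.
Proof. by []. Qed.

Lemma dist_pw (a a' : cfg n) (y y' : {ffun 'I_k -> bool}) :
  (forall i, (a i : nat) = y i) -> (forall i, (a' i : nat) = y' i) -> dist a a' = hd y y'.
Proof.
move=> Ha Ha'; rewrite /dist /hd; apply: eq_bigr => i _.
rewrite -val_eqE /= Ha Ha'.
by case: (y i); case: (y' i).
Qed.

Definition pmatch (p : seq bool) (v : {ffun 'I_b -> bool}) : bool :=
  [forall i : 'I_b, (i < size p)%N ==> (v i == nth false p i)].

Definition alivebv p y := [exists v, (y == enc v) && pmatch p v].

Definition alive p (c : cfg n) : Prop := exists2 y, alivebv p y & forall i, (c i : nat) = y i.

Definition negbv (y : {ffun 'I_k -> bool}) : {ffun 'I_k -> bool} := [ffun i => ~~ y i].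

Definition sweep p : seq (cfg n) :=
  [seq emb (negbv y) | y <- enum {ffun 'I_k -> bool} & ~~ alivebv p y].

Lemma notserves (c : cfg n) (y : {ffun 'I_k -> bool}) : (forall i, (c i : nat) != ~~ y i) -> ~~ serves c (emb (negbv y)).
Proof.
move=> H; rewrite /serves negb_exists; apply/forallP => i.
by rewrite -val_eqE /= ffunE; apply: H.
Qed.

Lemma sweep_ok p : (forall y0 y1, alivebv p y0 -> alivebv p y1 -> hd y0 y1 != 1%N) ->
  forall c, ~ alive p c -> exists2 r, r \in sweep p & ~~ serves c r.
Proof.
move=> NA c Hc.
have memsw y : ~~ alivebv p y -> emb (negbv y) \in sweep p.
  by move=> Hy; apply: map_f; rewrite mem_filter Hy mem_enum.
pose y0 := [ffun i => (c i == 1 :> nat)].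
have Hy0 : forall i, (c i : nat) != ~~ y0 i.
  move=> i; rewrite ffunE; case: (c i) => [[|[|m]] Hm] //.
case: (boolP [forall i, (c i < 2)%N]) => [/forallP Hb|].
  have Ha : ~~ alivebv p y0.
    apply/negP => Hal; apply: Hc; exists y0 => // i.
    rewrite ffunE; move: (Hb i); case: (c i) => [[|[|m]] Hm] //.
  by exists (emb (negbv y0)); [apply: memsw | apply: notserves].
rewrite negb_forall => /existsP [i0 Hi0].
pose y1 := [ffun i => (i == i0) || (c i == 1 :> nat)].
have Hy1 : forall i, (c i : nat) != ~~ y1 i.
  move=> i; rewrite ffunE; case: (i =P i0) => [->|_] /=.
    by move: Hi0; case: (c i0) => [[|[|m]] Hm].
  by case: (c i) => [[|[|m]] Hm].
have Hd : hd y0 y1 = 1%N.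
  rewrite /hd (bigD1 i0) //= big1 => [|i Hi].
    rewrite !ffunE eqxx /=; move: Hi0; case: (c i0) => [[|[|m]] Hm] //.
  by rewrite !ffunE (negbTE Hi) /= eqxx.
case: (boolP (alivebv p y0)) => [A0|A0]; last first.
  by exists (emb (negbv y0)); [apply: memsw | apply: notserves].
case: (boolP (alivebv p y1)) => [A1|A1]; last first.
  by exists (emb (negbv y1)); [apply: memsw | apply: notserves].
by move: (NA _ _ A0 A1); rewrite Hd.
Qed.

Lemma sweep_serves p v : pmatch p v -> forall r, r \in sweep p -> serves (emb (enc v)) r.
Proof.
move=> Hv r /mapP [y]; rewrite mem_filter => /andP [Hy _] ->.
have ne : y != enc v.
  apply: contra Hy => /eqP ->; apply/existsP; exists v; by rewrite eqxx.
have [i Hi] : exists i, y i != enc v i.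
  apply/existsP; rewrite -negb_forall; apply: contra ne => /forallP H.
  by apply/eqP/ffunP => i; apply/eqP/H.
apply/existsP; exists i; rewrite -val_eqE /= ffunE.
by move: Hi; case: (y i); case: (enc v i).
Qed.

End Bin.

Fixpoint bits (m : nat) : seq (seq bool) :=
  if m is m'.+1 then flatten [seq [:: rcons t false; rcons t true] | t <- bits m'] else [:: [::]].

Lemma big_flatten_map (T : Type) (F : T -> nat) (g : seq bool -> seq T) (l : seq (seq bool)) :
  (\sum_(u <- flatten (map g l)) F u = \sum_(t <- l) \sum_(u <- g t) F u)%N.
Proof. by elim: l => [|a l IH]; rewrite ?big_nil //= big_cat IH big_cons. Qed.

Lemma big_bits_S (F : seq bool -> nat) m :
  (\sum_(t <- bits m.+1) F t = \sum_(t <- bits m) (F (rcons t false) + F (rcons t true)))%N.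
Proof.
rewrite /= big_flatten_map; apply: eq_bigr => t _.
by rewrite !big_cons big_nil addn0.
Qed.

Lemma size_bits m : size (bits m) = (2 ^ m)%N.
Proof.
elim: m => [|m IH] //=; rewrite size_flatten /shape -map_comp.
rewrite (eq_map (g := fun _ => 2%N)) //.
rewrite expnS -IH; elim: (bits m) => [|a l IHl] //=.
by rewrite IHl mulnS.
Qed.

Lemma bits_size m t : t \in bits m -> size t = m.
Proof.
elim: m t => [|m IH] t /=; first by rewrite inE => /eqP ->.
move/flattenP => [l /mapP [u uin ->]]; rewrite !inE => /orP [] /eqP ->;
  by rewrite size_rcons (IH _ uin).
Qed.

Lemma take_rcons_le (T : Type) (t : seq T) x j : (j <= size t)%N -> take j (rcons t x) = take j t.
Proof.
rewrite -cats1 take_cat leq_eqVlt => /orP [/eqP ->|->] //.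
by rewrite ltnn subnn take0 cats0 take_size.
Qed.

Section Inp.
Variables (k : nat) (n : 'I_k -> nat) (h : forall i, (2 <= n i)%N).
Variables (b : nat) (enc : {ffun 'I_b -> bool} -> {ffun 'I_k -> bool}) (D : nat).

Definition phpre (t : seq bool) := drop (b * (size t %/ b)) t.
Definition blk (t : seq bool) (x : bool) : seq (cfg n) :=
  flatten (nseq D (sweep h enc (rcons (phpre t) x))).
Definition inp (t : seq bool) : seq (cfg n) :=
  flatten [seq blk (take j t) (nth false t j) | j <- iota 0 (size t)].

Lemma inp_rcons t x : inp (rcons t x) = inp t ++ blk t x.
Proof.
rewrite /inp size_rcons -addn1 iotaD map_cat flatten_cat /= cats0 add0n.
rewrite take_rcons_le ?leqnn // take_size nth_rcons ltnn eqxx; congr (_ ++ _).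
congr flatten; apply/eq_in_map => j; rewrite mem_iota add0n => /andP [_ Hj].
by rewrite take_rcons_le ?(ltnW Hj) // nth_rcons Hj.
Qed.

End Inp.

Lemma pos_prefix k (n : 'I_k -> nat) (start : cfg n) (A : online_alg n) P B t :
  (t <= size P)%N -> alg_pos start A (P ++ B) t = alg_pos start A P t.
Proof.
rewrite /alg_pos; case: (t =P 0%N) => // _.
rewrite take_cat leq_eqVlt => /orP [/eqP ->|->] //.
by rewrite ltnn subnn take0 cats0 take_size.
Qed.

Lemma alg_cost_cat k (n : 'I_k -> nat) (start : cfg n) (A : online_alg n) P B :
  alg_cost start A (P ++ B) =
  (alg_cost start A P + costr (alg_pos start A (P ++ B)) (size P) (size B))%N.
Proof.
rewrite /alg_cost size_cat big_split_ord /=; congr (_ + _)%N.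
  apply: eq_bigr => i _ /=.
  by rewrite !pos_prefix // ?(ltnW (ltn_ord i)) // ltn_ord.
Qed.

Lemma dist_sym k (n : 'I_k -> nat) (c c' : cfg n) : dist c c' = dist c' c.
Proof. by rewrite /dist; apply: eq_bigr => i _; rewrite eq_sym. Qed.

Lemma hd_refl k (y : {ffun 'I_k -> bool}) : hd y y = 0%N.
Proof. by rewrite /hd big1 // => i _; rewrite eqxx. Qed.

Lemma arith1 (a x0 x1 D : nat) : (D <= x0 + x1 -> 2*a + D <= (a + x0) + (a + x1))%N.
Proof. lia. Qed.

Lemma arith2 (m P D S0 S1 : nat) : (2 * S0 + P * D <= S1 -> m * P * D <= 2 * S0 ->
  m.+1 * (2 * P) * D <= 2 * S1)%N.
Proof.
move=> H1 H2; have E : (m.+1 * (2 * P) * D = 2 * (m * P * D + P * D))%N.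
  ring.
rewrite E leq_pmul2l //; apply: leq_trans H1; rewrite leq_add2r.
by [].
Qed.

Section Alg.
Variables (k : nat) (n : 'I_k -> nat) (h : forall i, (2 <= n i)%N).
Variables (b : nat) (enc : {ffun 'I_b -> bool} -> {ffun 'I_k -> bool}) (D : nat).
Hypothesis Hsep : forall v v', v != v' -> (D <= hd (enc v) (enc v'))%N.
Hypothesis HD : (1 < D)%N || (b == 1%N).
Hypothesis Hb : (0 < b)%N.
Variables (start : cfg n) (A : online_alg n).
Hypothesis vA : valid_alg A.

Lemma noadj p : (0 < size p)%N ->
  forall y0 y1, alivebv enc p y0 -> alivebv enc p y1 -> hd y0 y1 != 1%N.
Proof.
move=> Hp y0 y1 /existsP [v0 /andP [/eqP -> M0]] /existsP [v1 /andP [/eqP -> M1]].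
case: (v0 =P v1) => [->|/eqP ne]; first by rewrite hd_refl.
case/orP: HD => [HD2|/eqP b1].
  by apply/eqP => E; move: (Hsep ne); rewrite E; case: D HD2 => [|[|]].
exfalso; move/eqP: ne; apply; apply/ffunP => i.
move/forallP: M0 => /(_ i); move/forallP: M1 => /(_ i).
have -> : (i < size p)%N.
  by apply: leq_trans Hp; have := ltn_ord i; rewrite {2}b1 ltnS.
by move=> /= /eqP -> /eqP ->.
Qed.

Lemma size_phpre t : (size (phpre b t) < b)%N.
Proof.
rewrite /phpre size_drop {1}(divn_eq (size t) b) mulnC addKn.
exact: ltn_pmod.
Qed.

Lemma sepalive p0 a0 a1 : (size p0 < b)%N ->
  alive (n:=n) enc (rcons p0 false) a0 -> alive (n:=n) enc (rcons p0 true) a1 -> (D <= dist a0 a1)%N.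
Proof.
move=> Hp [y0 /existsP [v0 /andP [/eqP E0 M0]] P0] [y1 /existsP [v1 /andP [/eqP E1 M1]] P1].
rewrite (dist_pw P0 P1) E0 E1; apply: Hsep.
pose i := Ordinal Hp.
have e0 : v0 i = false.
  move/forallP: M0 => /(_ i); rewrite /= size_rcons ltnSn nth_rcons ltnn eqxx /=.
  by move/eqP.
have e1 : v1 i = true.
  move/forallP: M1 => /(_ i); rewrite /= size_rcons ltnSn nth_rcons ltnn eqxx /=.
  by move/eqP.
by apply/eqP => E; move: e0; rewrite E e1.
Qed.

Lemma blk_step t x :
  let P := inp h enc D t in let B := blk h enc D t x in
  (D <= costr (alg_pos start A (P ++ B)) (size P) (size B))%N \/
  exists2 a, alive (n:=n) enc (rcons (phpre b t) x) a &
     (dist (alg_pos start A P (size P)) a <= costr (alg_pos start A (P ++ B)) (size P) (size B))%N.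
Proof.
move=> P B.
rewrite -(@pos_prefix _ _ start A P B) //.
apply: (@sweeps_lb _ _ _ (sweep h enc (rcons (phpre b t) x)) start).
  apply: sweep_ok; apply: noadj; by rewrite size_rcons.
rewrite -/B; move=> i Hi; rewrite /alg_pos /=.
have -> : take (size P + i).+1 (P ++ B) = P ++ take i.+1 B.
  by rewrite take_cat ltnNge -addnS leq_addr /= addKn.
rewrite (take_nth start Hi) -rcons_cat; exact: vA.
Qed.

Definition Xc t x := costr (alg_pos start A (inp h enc D t ++ blk h enc D t x))
   (size (inp h enc D t)) (size (blk h enc D t x)).

Lemma pair_step t : (D <= Xc t false + Xc t true)%N.
Proof.
rewrite /Xc; case: (blk_step t false) => [H0|[a0 A0 H0]].
  by apply: leq_trans H0 _; apply: leq_addr.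
case: (blk_step t true) => [H1|[a1 A1 H1]].
  by apply: leq_trans H1 _; apply: leq_addl.
apply: leq_trans (sepalive (size_phpre t) A0 A1) _.
apply: leq_trans (dist_tri _ (alg_pos start A (inp h enc D t) (size (inp h enc D t))) _) _.
by rewrite dist_sym; apply: leq_add.
Qed.

Lemma alg_lb m : (m * 2 ^ m * D <= 2 * \sum_(t <- bits m) alg_cost start A (inp h enc D t))%N.
Proof.
elim: m => [|m IH]; first by [].
rewrite big_bits_S.
have E : forall t x, alg_cost start A (inp h enc D (rcons t x)) =
    (alg_cost start A (inp h enc D t) + Xc t x)%N.
  by move=> t x; rewrite inp_rcons alg_cost_cat.
have H : (\sum_(t <- bits m) (2 * alg_cost start A (inp h enc D t) + D) <=
   \sum_(t <- bits m) (alg_cost start A (inp h enc D (rcons t false)) +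
                       alg_cost start A (inp h enc D (rcons t true))))%N.
  apply: leq_sum => t _; rewrite (E t false) (E t true).
  exact: arith1 (pair_step t).
have Hc : (\sum_(t <- bits m) (2 * alg_cost start A (inp h enc D t) + D) =
    2 * \sum_(t <- bits m) alg_cost start A (inp h enc D t) + 2 ^ m * D)%N.
  rewrite big_split /= -big_distrr /= big_const_seq count_predT size_bits iter_addn_0.
  by rewrite (mulnC D).
move: H IH; rewrite Hc expnS; exact: arith2.
Qed.

End Alg.

Fixpoint ocost k (n : 'I_k -> nat) (st : cfg n) (s : seq (cfg n)) : nat :=
  if s is x :: s' then (dist st x + ocost x s')%N else 0%N.

Lemma offline_ocost k (n : 'I_k -> nat) (start : cfg n) s :
  offline_cost start s = ocost start s.
Proof.
rewrite /offline_cost.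
suff : forall st, (\sum_(t < size s) dist (nth start (st :: s) t) (nth start s t))%N = ocost st s by apply.
elim: s => [|x s IH] st; first by rewrite big_ord0.
by rewrite /= big_ord_recl /= -IH.
Qed.

Lemma ocost_cat k (n : 'I_k -> nat) (st : cfg n) s1 s2 :
  ocost st (s1 ++ s2) = (ocost st s1 + ocost (last st s1) s2)%N.
Proof. by elim: s1 st => [|x s1 IH] st //=; rewrite IH addnA. Qed.

Lemma ocost_nseq k (n : 'I_k -> nat) (st c : cfg n) m : (ocost st (nseq m c) <= k)%N.
Proof.
case: m => [|m] //=.
have -> : ocost c (nseq m c) = 0%N by elim: m => //= m ->; rewrite dist_refl.
by rewrite addn0 dist_le_k.
Qed.

Lemma flatten_nseq_const (T : Type) (c : T) (l : seq nat) :
  flatten [seq nseq m c | m <- l] = nseq (sumn l) c.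
Proof. by elim: l => //= m l ->; rewrite nseqD. Qed.

Lemma aligned k (n : 'I_k -> nat) (d : cfg n) (l : seq (seq (cfg n) * cfg n)) :
  (forall x, x \in l -> forall r, r \in x.1 -> serves x.2 r) ->
  size (flatten [seq nseq (size x.1) x.2 | x <- l]) = size (flatten (map fst l)) /\
  forall t, (t < size (flatten (map fst l)))%N ->
    serves (nth d (flatten [seq nseq (size x.1) x.2 | x <- l]) t) (nth d (flatten (map fst l)) t).
Proof.
elim: l => [|[B c] l IH] H; first by split.
have H' : forall x, x \in l -> forall r, r \in x.1 -> serves x.2 r.
  by move=> x xin; apply: H; rewrite inE xin orbT.
have [IH1 IH2] := IH H'.
rewrite /= !size_cat size_nseq IH1; split => // t.
rewrite !nth_cat size_nseq; case: (ltnP t (size B)) => Ht.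
  move=> _; rewrite nth_nseq Ht; apply: (H (B, c)); first by rewrite inE eqxx.
  exact: mem_nth.
by move=> Ht'; apply: IH2; move: Ht Ht'; lia.
Qed.

Section Off.
Variables (k : nat) (n : 'I_k -> nat) (h : forall i, (2 <= n i)%N).
Variables (b : nat) (enc : {ffun 'I_b -> bool} -> {ffun 'I_k -> bool}) (D : nat).
Hypothesis Hb : (0 < b)%N.
Variable (start : cfg n).

Definition vphi (t : seq bool) (ph : nat) : {ffun 'I_b -> bool} :=
  [ffun i : 'I_b => nth false t (ph * b + i)].
Definition conf t j : cfg n := emb h (enc (vphi t (j %/ b))).
Definition Gb t j : seq (cfg n) := nseq (size (blk h enc D (take j t) (nth false t j))) (conf t j).
Definition offs t M := flatten [seq Gb t j | j <- iota 0 (M * b)].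

Lemma offs_cost t M : (ocost start (offs t M) <= M * k)%N.
Proof.
elim: M => [|M IH]; first by rewrite /offs mul0n.
rewrite /offs mulSnr iotaD map_cat flatten_cat ocost_cat add0n mulSnr.
apply: leq_add => //.
have -> : flatten [seq Gb t j | j <- iota (M * b) b] =
   nseq (sumn [seq size (blk h enc D (take j t) (nth false t j)) | j <- iota (M * b) b])
        (emb h (enc (vphi t M))).
  rewrite -flatten_nseq_const -map_comp; congr flatten; apply/eq_in_map => j.
  rewrite mem_iota => /andP [H1 H2]; rewrite /Gb /conf /=; congr nseq.
  have -> : (j %/ b = M)%N.
    rewrite -(subnKC H1) divnMDl // divn_small ?addn0 //.
    by move: H2; lia.
  by [].
exact: ocost_nseq.
Qed.

Lemma pmatch_ok t j : (j < size t)%N ->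
  pmatch (rcons (phpre b (take j t)) (nth false t j)) (vphi t (j %/ b)).
Proof.
move=> Hj; apply/forallP => i; apply/implyP.
have Hs : size (phpre b (take j t)) = (j %% b)%N.
  rewrite /phpre size_drop size_take Hj {1}(divn_eq j b) mulnC addKn.
  by [].
rewrite size_rcons Hs ltnS leq_eqVlt => /orP [/eqP Hi|Hi].
  rewrite nth_rcons Hs Hi ltnn eqxx ffunE Hi -divn_eq.
  by [].
rewrite nth_rcons Hs Hi /phpre nth_drop size_take Hj nth_take ?ffunE ?(mulnC b) //.
set q := (j %/ b * b)%N; set r := (j %% b)%N.
have : j = (q + r)%N by rewrite /q /r -divn_eq.
by move: Hi; lia.
Qed.

Lemma offs_feasible t M : size t = (M * b)%N ->
  offline_feasible start (inp h enc D t) (offs t M).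
Proof.
move=> Ht.
pose l := [seq (blk h enc D (take j t) (nth false t j), conf t j) | j <- iota 0 (size t)].
have E1 : inp h enc D t = flatten (map fst l) by rewrite /inp -map_comp.
have E2 : offs t M = flatten [seq nseq (size x.1) x.2 | x <- l].
  by rewrite /offs -map_comp -Ht.
have Hl : forall x, x \in l -> forall r, r \in x.1 -> serves x.2 r.
  move=> x /mapP [j]; rewrite mem_iota add0n => /andP [_ Hj] -> r /= /flattenP [sw].
  rewrite mem_nseq => /andP [_ /eqP ->] rin.
  by apply: (sweep_serves (pmatch_ok Hj)).
have [S1 S2] := aligned start Hl.
by rewrite /offline_feasible E1 E2; split.
Qed.

End Off.

Local Open Scope ring_scope.

Lemma real_limit (R : realType) (x y g : R) :
  (forall M : nat, M%:R * x <= M%:R * y + g) -> x <= y.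
Proof.
move=> H; rewrite leNgt; apply/negP => Hxy.
have dpos : 0 < x - y by rewrite subr_gt0.
pose M := Num.Def.archi_bound (`|g| / (x - y)).
have HM : `|g| / (x - y) < M%:R by apply: archi_boundP; rewrite divr_ge0 // ltW.
rewrite ltr_pdivrMr // mulrBr in HM.
have := H M; have := ler_norm g.
set a := M%:R * x; set b := M%:R * y; move: HM; rewrite -/a -/b.
lra.
Qed.

Lemma opt_le (R : realType) k (n : 'I_k -> nat) (start : cfg n) I (s : seq (cfg n)) :
  offline_feasible start I s -> 0 <= OPT R start I <= (offline_cost start s)%:R.
Proof.
move=> Hf; rewrite /OPT.
set E := (X in inf X).
have lb : classical_sets.lbound E 0 by move=> x [s' [_ ->]]; exact: ler0n.
have Es : E (offline_cost start s)%:R by exists s.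
apply/andP; split.
  by apply: lb_le_inf => //; exists (offline_cost start s)%:R.
by apply: ge_inf => //; exists 0.
Qed.

Lemma iter_addr_cst (R : realType) (c : R) m : iter m (+%R c) 0 = c *+ m.
Proof. by elim: m => //= m ->; rewrite mulrS. Qed.

Theorem theorem9 (R : realType) :
  exists c : R, 0 < c /\
  forall (k : nat) (n : 'I_k -> nat), (1 <= k)%N ->
  (forall i, (2 <= n i)%N) ->
  forall (start : cfg n) (d : measure_display) (Omega : measurableType d)
         (P : probability Omega R) (A : Omega -> online_alg n) (beta : R),
  randomized_alg P A start ->
  competitive P A start beta ->
  c * k%:R <= beta.
Proof.
exists (4608%:R)^-1; split; first by rewrite invr_gt0 ltr0n.
move=> k n hk hn start d Omega P A beta [vA mA] [gamma Hc].
have [b [D [enc [Hb HD Hsep Hkk]]]] := code_exists hk.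
set bp := Order.max beta 0.
have bp0 : 0 <= bp by rewrite le_max lexx orbT.
have bpb : beta <= bp by rewrite le_max lexx.
have key : forall M : nat, M%:R * (b * D)%:R <= M%:R * (2 * bp * k%:R) + 2 * gamma.
  move=> M; set m := (M * b)%N.
  pose f (t : seq bool) (w : Omega) : \bar R := ((alg_cost start (A w) (inp hn enc D t))%:R)%:E.
  have mf : forall t, measurable_fun setT (f t).
    by move=> t; apply/measurable_EFinP; exact: mA.
  have f0 : forall t w, setT w -> (0 <= f t w)%E by move=> t w _; rewrite lee_fin ler0n.
  have I1 := ge0_integral_sum P measurableT mf f0 (bits m).
  have I2 : (\sum_(t <- bits m) \int[P]_(w in setT) f t w <=
             \sum_(t <- bits m) (bp * (M * k)%:R + gamma)%:E)%E.
    rewrite big_seq_cond [X in (_ <= X)%E]big_seq_cond; apply: lee_sum => t /andP [tin _].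
    apply: le_trans (Hc (inp hn enc D t)) _; rewrite lee_fin lerD2r.
    have Ht : size t = (M * b)%N by rewrite (bits_size tin).
    have /andP [O0 O1] := opt_le R (offs_feasible hn enc D Hb start Ht).
    have O2 : OPT R start (inp hn enc D t) <= (M * k)%:R.
      apply: le_trans O1 _; rewrite offline_ocost ler_nat; exact: offs_cost.
    apply: le_trans (ler_wpM2r O0 bpb) _; exact: ler_wpM2l.
  have I3 : (((m * 2 ^ m * D)%:R / 2 : R)%:E <= \int[P]_(w in setT) (\sum_(t <- bits m) f t w))%E.
    have -> : (((m * 2 ^ m * D)%:R / 2 : R)%:E =
        \int[P]_(w in setT) (functions.cst ((m * 2 ^ m * D)%:R / 2 : R)%:E w))%E.
      rewrite integral_cst // -[LHS]mule1; congr (_ * _)%E; exact/esym/probability_setT.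
    apply: ge0_le_integral => //.
    - by move=> w _; rewrite lee_fin divr_ge0 // ler0n.
    - exact: emeasurable_sum.
    - move=> w _; rewrite /f sumEFin lee_fin -natr_sum ler_pdivrMr // -natrM ler_nat [X in (_ <= X)%N]mulnC.
      exact: (alg_lb hn Hsep HD Hb start (vA w) m).
  move: I3; rewrite I1 => I3; move: (le_trans I3 I2).
  rewrite sumEFin lee_fin big_const_seq count_predT size_bits iter_addr_cst.
  rewrite -(mulr_natr (bp * (M * k)%:R + gamma) (2 ^ m)) => H.
  have Tp : 0 < (2 ^ m)%:R :> R by rewrite ltr0n expn_gt0.
  rewrite (_ : (m * 2 ^ m * D)%:R = (M * (b * D))%:R * (2 ^ m)%:R :> R) in H; last first.
    by rewrite -natrM /m; congr (_%:R); ring.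
  rewrite ler_pdivrMr ?ltr0Sn // -mulrA (mulrC (2 ^ m)%:R 2) mulrA ler_pM2r // in H.
  have -> : M%:R * (2 * bp * k%:R) + 2 * gamma = (bp * (M * k)%:R + gamma) * 2.
    by rewrite natrM; ring.
  by rewrite -natrM.
have H1 : (b * D)%:R <= 2 * bp * k%:R :> R.
  by apply: (real_limit (g := 2 * gamma)).
have kpos : 0 < k%:R :> R by rewrite ltr0n.
have H2 : k%:R * k%:R <= 4608%:R * bp * k%:R :> R.
  apply: (@le_trans _ _ (2304%:R * (b * D)%:R)).
    by rewrite -!natrM ler_nat.
  have -> : 4608%:R * bp * k%:R = 2304%:R * (2 * bp * k%:R) :> R.
    by rewrite -[4608%:R]/((2304 * 2)%:R : R) natrM; ring.
  by rewrite ler_pM2l ?ltr0n.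
have H3 : k%:R <= 4608%:R * bp :> R by rewrite -(ler_pM2r kpos).
have bpe : bp = beta.
  move: H3; rewrite /bp; case: (lerP 0 beta) => hb //.
  by rewrite mulr0 leNgt kpos.
rewrite -bpe mulrC ler_pdivrMr ?ltr0n // mulrC.
exact: H3.
Qed.
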